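(* Let $n\geq 3$ and let $L^B$ be a blow-up of the Boolean lattice $L\cong\mathbf{2}^n$. Then: (1) $V(G^c(L^B)_{SR})=V(G^c(L^B))$; (2) for all $x,y\in V(G^c(L^B)_{SR})$ with $x\neq y$ and $[x]=[y]$, $x$ is adjacent to $y$ in $G^c(L^B)_{SR}$; (3) for all $x,y\in V(G^c(L^B)_{SR})$ with $[x]\neq[y]$, $x$ is adjacent to $y$ in $G^c(L^B)_{SR}$ if and only if $x$ is not adjacent to $y$ in $G^c(L^B)$.
   Context: Blow-up: keep $0,1$ of $L=\mathbf{2}^n$ and replace every $x\in L\setminus\{0,1\}$ by a finite nonempty chain $C_x$; within $C_x$ use the chain order, for $a\in C_x,b\in C_y$, $x\neq y$, put $a\leq b$ iff $x\leq y$ in $L$; $0$ is least and $1$ greatest. For $a$ in a lattice with $0$, $a^\perp=\{b: a\wedge b=0\}$; $x\sim y$ iff $x^\perp=y^\perp$, and $[x]$ is the class of $x$. $Z^*(M)$ is the set of nonzero $a$ with $a\wedge b=0$ for some $b\neq 0$; $G^c(M)$ has vertex set $Z^*(M)$, distinct $a,b$ adjacent iff $a\wedge b\neq 0$. In a connected graph, $u$ is maximally distant from $v$ if $d(v,w)\leq d(u,v)$ for all neighbours $w$ of $u$; mutually maximally distant means each is maximally distant from the other. $G_{SR}$ has as vertices those $u$ mutually maximally distant from some $v$, with distinct vertices adjacent iff mutually maximally distant in $G$. *)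

(* Defs.v *)
From mathcomp Require Import all_boot.
Set Implicit Arguments. Unset Strict Implicit. Unset Printing Implicit Defensive.

Section LatticeNotions.
Variables (T : finType) (le : rel T) (z : T).

Definition is_meet (a b m : T) : bool :=
  [&& le m a, le m b & [forall c, (le c a && le c b) ==> le c m]].

Definition meet0 (a b : T) : bool := is_meet a b z.

Definition perp (a : T) : {set T} := [set b | meet0 a b].

(* x ~ y iff x^perp = y^perp, i.e. [x] = [y] *)
Definition same_class (x y : T) : bool := perp x == perp y.

Definition Zstar : {set T} :=
  [set a | (a != z) && [exists b, (b != z) && meet0 a b]].

Definition Gc_adj : rel T :=
  fun a b => [&& a \in Zstar, b \in Zstar, a != b & ~~ meet0 a b].
End LatticeNotions.

Section GraphNotions.
Variables (T : finType) (e : rel T) (V : {set T}).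

Definition walk_len (k : nat) (u v : T) : bool :=
  [exists p : k.-tuple T, path e u p && (last u p == v)].

(* graph distance; #|T| (larger than any finite distance) plays the role of
   infinity when v is unreachable from u *)
Definition gdist (u v : T) : nat := find (fun k => walk_len k u v) (iota 0 #|T|).

Definition max_dist (u v : T) : Prop :=
  forall w, e u w -> gdist v w <= gdist u v.

Definition mmd (u v : T) : Prop :=
  u \in V /\ v \in V /\ max_dist u v /\ max_dist v u.

Definition SR_vertex (u : T) : Prop := exists v, mmd u v.

Definition SR_adj (u v : T) : Prop := SR_vertex u /\ SR_vertex v /\ u <> v /\ mmd u v.
End GraphNotions.

Section BlowUp.
Variables (n : nat) (k : {set 'I_n} -> nat).

(* chain sizes: 0 = set0 and 1 = setT are kept as singletons, every other x
   is replaced by a chain C_x of size k x (assumed positive in the theorem) *)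
Definition csize (x : {set 'I_n}) : nat :=
  if (x == set0) || (x == setT) then 1 else k x.

(* element (x, i) : i-th element (bottom-up) of the chain C_x *)
Definition blowup := {x : {set 'I_n} & 'I_(csize x)}.

Definition bu_le : rel blowup := fun a b =>
  if tag a == tag b then (val (tagged a) <= val (tagged b))%N
  else tag a \proper tag b.

Lemma csize_set0 : 0 < csize set0.
Proof. by rewrite /csize eqxx. Qed.

Definition bu0 : blowup := Tagged (fun x => 'I_(csize x)) (Ordinal csize_set0).
End BlowUp.

(* Main.v *)
Require Import Defs.
From mathcomp Require Import all_boot.
Set Implicit Arguments. Unset Strict Implicit. Unset Printing Implicit Defensive.

Section Walks.
Variables (T : finType) (e : rel T).

Lemma walk0 u v : walk_len e 0 u v = (u == v).
Proof.
apply/existsP/idP => [[p]|/eqP->]; first by rewrite tuple0 /=.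
by exists [tuple]; rewrite /= eqxx.
Qed.

Lemma walk1 u v : walk_len e 1 u v = e u v.
Proof.
apply/existsP/idP => [[p]|h].
  case: p => [[|w [|? ?]] hs] //=.
  by rewrite andbT => /andP [h /eqP <-].
by exists [tuple v]; rewrite /= h eqxx.
Qed.

Lemma walk2 u v w : e u w -> e w v -> walk_len e 2 u v.
Proof. by move=> h1 h2; apply/existsP; exists [tuple w; v]; rewrite /= h1 h2 eqxx. Qed.

Hypothesis cardT : 2 < #|T|.

Lemma gdistE u v : gdist e u v =
  if walk_len e 0 u v then 0 else if walk_len e 1 u v then 1 else
  if walk_len e 2 u v then 2 else (find (fun k => walk_len e k u v) (iota 3 (#|T| - 3))).+3.
Proof.
rewrite /gdist; move: cardT; case: #|T| => [|[|[|m]]] //= _.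
by rewrite !subSS subn0; case: ifP => //; case: ifP => //; case: ifP.
Qed.

Lemma gdist0 u : gdist e u u = 0.
Proof. by rewrite gdistE walk0 eqxx. Qed.

Lemma gdist1 u v : u != v -> e u v -> gdist e u v = 1.
Proof. by move=> /negbTE h1 h2; rewrite gdistE walk0 walk1 h1 h2. Qed.

Lemma gdist2 u v w : u != v -> ~~ e u v -> e u w -> e w v -> gdist e u v = 2.
Proof.
by move=> /negbTE h1 /negbTE h2 h3 h4; rewrite gdistE walk0 walk1 h1 h2 (walk2 h3 h4).
Qed.
End Walks.

Section Blow.
Variables (n : nat) (k : {set 'I_n} -> nat).
Hypothesis hn : 3 <= n.
Hypothesis hk : forall x : {set 'I_n}, x != set0 -> x != setT -> 0 < k x.
Local Notation T := (@blowup n k).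
Local Notation le := (@bu_le n k).
Local Notation z := (@bu0 n k).

Lemma csize_pos X : 0 < csize k X.
Proof. rewrite /csize; case: ifP => // /norP [h1 h2]; exact: hk. Qed.

Definition elt X : T := Tagged (fun x => 'I_(csize k x)) (Ordinal (csize_pos X)).
Lemma tag_elt X : tag (elt X) = X. Proof. by []. Qed.
Lemma tag_z : tag z = set0. Proof. by []. Qed.

Lemma tag0E (c : T) : tag c = set0 -> c = z.
Proof.
case: c => x i /= hx; subst x.
suff -> : i = Ordinal (csize_set0 k) by [].
apply: val_inj => /=.
have h1 : csize k set0 = 1 by rewrite /csize eqxx.
have := leq_trans (ltn_ord i) (eq_leq h1).
by rewrite ltnS leqn0 => /eqP.
Qed.

Lemma le_tag (a b : T) : le a b -> tag a \subset tag b.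
Proof. rewrite /bu_le; case: eqP => [e _ | _ /proper_sub //]; rewrite e; exact: subxx. Qed.

Lemma le_z (a : T) : le z a.
Proof.
rewrite /bu_le /=; case: eqP => [//|/eqP h].
by rewrite properE sub0set /= subset0 eq_sym.
Qed.

Lemma meet0E (a b : T) : meet0 le z a b = (tag a :&: tag b == set0).
Proof.
rewrite /meet0 /is_meet !le_z /=.
apply/forallP/idP.
- move=> H; apply/negPn/negP => hne.
  pose c := elt (tag a :&: tag b).
  have hc : le c a && le c b.
    rewrite /c /bu_le /=.
    case: eqP => [_|ne]; case: eqP => [_|ne'] //=.
    1-3: rewrite ?properEneq ?subsetIl ?subsetIr ?leq0n ?andbT //.
    1,2: by apply/eqP.
    by apply/andP; split; apply/eqP.
  have := H c; rewrite hc /= => /le_tag; rewrite tag_elt tag_z subset0.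
  by rewrite (negbTE hne).
- move=> /eqP h c; apply/implyP => /andP [ca cb].
  have : tag c \subset set0 by rewrite -h subsetI !le_tag.
  by rewrite subset0 => /eqP /tag0E ->; apply: le_z.
Qed.

Lemma setI1_0 (X : {set 'I_n}) i : (X :&: [set i] == set0) = (i \notin X).
Proof.
apply/eqP/idP => [h|h].
  apply/negP => hi; have : i \in X :&: [set i] by rewrite !inE hi eqxx.
  by rewrite h inE.
apply/setP => j; rewrite !inE andbC; case: (eqVneq j i) => [->|] //=.
exact: negbTE.
Qed.

Lemma neq0 (X : {set 'I_n}) i : i \in X -> X != set0.
Proof. by move=> h; apply/set0Pn; exists i. Qed.

Lemma neqT (X : {set 'I_n}) : #|X| < n -> X != setT.
Proof. by apply: contraTneq => ->; rewrite cardsT card_ord ltnn. Qed.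

Definition P (a : T) := (tag a != set0) && (tag a != setT).

Lemma inVE (a : T) : (a \in Zstar le z) = P a.
Proof.
rewrite inE /P.
case: (eqVneq (tag a) set0) => [/tag0E -> | h0] /=; first by rewrite eqxx.
have az : a != z by apply: contra_neq h0 => ->.
rewrite az /=; apply/existsP/idP.
- case=> b /andP [bz]; rewrite meet0E => hd; apply/eqP => hT.
  rewrite hT setTI in hd.
  by move: bz; rewrite (tag0E (eqP hd)) eqxx.
- move=> hT.
  have : ~~ (setT \subset tag a) by rewrite subTset.
  case/subsetPn => i _ hi.
  exists (elt [set i]); rewrite meet0E tag_elt setI1_0 hi andbT.
  apply: contraTneq isT => e; move: (congr1 tag e).
  by rewrite tag_elt tag_z => /setP /(_ i); rewrite !inE eqxx.
Qed.

Local Notation G := (Gc_adj le z).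
Local Notation V := (Zstar le z).

Lemma GE (a b : T) : G a b = [&& P a, P b, a != b & tag a :&: tag b != set0].
Proof. by rewrite /Gc_adj meet0E !inVE. Qed.

Lemma Gsym (a b : T) : G a b = G b a.
Proof. by rewrite !GE setIC eq_sym; case: (P a); case: (P b). Qed.

Lemma cardT3 : 2 < #|{: T}|.
Proof.
have inj : injective (fun i : 'I_n => elt [set i]).
  by move=> i j /(congr1 tag); rewrite !tag_elt => /set1_inj.
by have := leq_card _ inj; rewrite card_ord; apply: leq_trans.
Qed.

Lemma dist_le2 (a b : T) : P a -> P b -> gdist G a b <= 2.
Proof.
move=> Pa Pb.
case: (eqVneq a b) => [->|ab]; first by rewrite gdist0 // cardT3.
case: (eqVneq (tag a :&: tag b) set0) => hI; last first.
  by rewrite (gdist1 cardT3 ab) // GE Pa Pb ab hI.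
have ha : tag a != set0 by case/andP: Pa.
have hb : tag b != set0 by case/andP: Pb.
case/set0Pn: ha => i hi; case/set0Pn: hb => j hj.
have jna : j \notin tag a.
  apply/negP => ja; have : j \in tag a :&: tag b by rewrite inE ja hj.
  by rewrite hI inE.
have inb : i \notin tag b.
  apply/negP => ib; have : i \in tag a :&: tag b by rewrite inE ib hi.
  by rewrite hI inE.
have ij : i != j by apply: contraNneq jna => <-.
have Pw : P (elt [set i; j]).
  rewrite /P tag_elt (neq0 (i := i)) ?inE ?eqxx //= neqT // cards2 ij.
  exact: leq_trans hn.
have Gaw : G a (elt [set i; j]).
  rewrite GE Pa Pw /=; apply/andP; split.
    by apply: contraNneq jna => ->; rewrite ?tag_elt !inE eqxx orbT.
  by apply: (neq0 (i := i)); rewrite ?tag_elt !inE hi eqxx.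
have Gwb : G (elt [set i; j]) b.
  rewrite GE Pb Pw /=; apply/andP; split.
    by apply: contraNneq inb => <-; rewrite ?tag_elt !inE eqxx.
  by apply: (neq0 (i := j)); rewrite ?tag_elt !inE hj eqxx orbT.
rewrite (gdist2 cardT3 ab _ Gaw Gwb) //.
by rewrite GE hI eqxx !andbF.
Qed.

Lemma Pneq (a b : T) : tag a != tag b -> a != b.
Proof. by apply: contraNneq => ->. Qed.

Lemma gdist_far (a b : T) : P a -> P b -> tag a :&: tag b == set0 -> gdist G a b = 2.
Proof.
move=> Pa Pb hI.
have ab : a != b.
  apply: contraTneq hI => ->; rewrite setIid.
  by case/andP: Pb.
have nG : ~~ G a b by rewrite GE hI !andbF.
have := dist_le2 Pa Pb.
rewrite gdistE ?cardT3 // walk0 walk1 (negbTE ab) (negbTE nG).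
by case: ifP.
Qed.

Lemma mmd_far (a b : T) : P a -> P b -> tag a :&: tag b == set0 -> mmd G V a b.
Proof.
move=> Pa Pb hI; rewrite /mmd !inVE Pa Pb; do 2!split => //.
split => w.
  rewrite (gdist_far Pa Pb hI) GE => /and4P [_ Pw _ _]; exact: dist_le2.
rewrite setIC in hI.
rewrite (gdist_far Pb Pa hI) GE => /and4P [_ Pw _ _]; exact: dist_le2.
Qed.

Lemma same_classE (x y : T) : same_class le z x y = (tag x == tag y).
Proof.
apply/idP/idP.
  move/eqP/setP => h; apply/eqP/setP => i.
  have := h (elt [set i]); rewrite !inE !meet0E tag_elt !setI1_0.
  by case: (i \in tag x); case: (i \in tag y).
move/eqP => e; apply/eqP/setP => b; by rewrite !inE !meet0E e.
Qed.

Lemma SR_vertexE (x : T) : SR_vertex G V x <-> P x.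
Proof.
split; first by case=> v [h _]; rewrite -inVE.
move=> Px; exists (elt (~: tag x)); apply: mmd_far => //; last first.
  by rewrite tag_elt setICr.
case/andP: Px => h1 h2; rewrite /P tag_elt; apply/andP; split.
  by apply: contra_neq h2 => h; rewrite -[tag x]setCK h setC0.
by apply: contra_neq h1 => h; rewrite -[tag x]setCK h setCT.
Qed.

Lemma not_mmd (x y : T) : G x y -> ~~ (tag x \subset tag y) -> ~ max_dist G x y.
Proof.
move=> Gxy /subsetPn [i ix iy] md.
have Gxy' := Gxy; move: Gxy'; rewrite GE => /and4P [Px Py xy hI].
have Pw : P (elt [set i]).
  rewrite /P tag_elt (neq0 (i := i)) ?inE ?eqxx //= neqT // cards1.
  exact: leq_trans hn.
have Gxw : G x (elt [set i]).
  rewrite GE Px Pw /=; apply/andP; split.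
    apply: contraNneq hI => e; rewrite e tag_elt setIC setI1_0 //.
  by apply: (neq0 (i := i)); rewrite ?tag_elt !inE ix eqxx.
have := md (elt [set i]) Gxw.
rewrite (gdist1 cardT3 xy Gxy) gdist_far //.
by rewrite tag_elt setI1_0.
Qed.

End Blow.

Theorem lemma3p16 (n : nat) (k : {set 'I_n} -> nat)
  (hn : 3 <= n)
  (hk : forall x : {set 'I_n}, x != set0 -> x != setT -> 0 < k x) :
  let le := @bu_le n k in
  let z := @bu0 n k in
  let G := Gc_adj le z in
  let V := Zstar le z in
  (* (1) V(G_SR) = V(G) *)
  (forall x : @blowup n k, SR_vertex G V x <-> x \in V) /\
  (* (2) *)
  (forall x y : @blowup n k, SR_vertex G V x -> SR_vertex G V y ->
     x <> y -> same_class le z x y -> SR_adj G V x y) /\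
  (* (3) *)
  (forall x y : @blowup n k, SR_vertex G V x -> SR_vertex G V y ->
     ~~ same_class le z x y -> (SR_adj G V x y <-> ~~ G x y)).
Proof.
cbv zeta.
split; first by move=> x; rewrite (inVE hk); exact: SR_vertexE.
split.
  move=> x y sx sy xy; rewrite (same_classE hk) => /eqP e.
  have Px := (SR_vertexE hn hk x).1 sx.
  have Py := (SR_vertexE hn hk y).1 sy.
  have Gxy : Gc_adj (@bu_le n k) (@bu0 n k) x y.
    rewrite (GE hk) Px Py /= e setIid; apply/andP; split; first by apply/eqP.
    by case/andP: Py.
  have Gyx : Gc_adj (@bu_le n k) (@bu0 n k) y x by rewrite (Gsym hk).
  have xy' : x != y by apply/eqP.
  have yx' : y != x by rewrite eq_sym.
  split => //; split => //; split => //.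
  rewrite /mmd !(inVE hk) Px Py; do 2!split => //.
  split => w.
    rewrite (gdist1 (cardT3 hn hk) xy' Gxy) => Gxw.
    case: (eqVneq y w) => [<-|yw]; first by rewrite gdist0 // (cardT3 hn hk).
    rewrite (gdist1 (cardT3 hn hk) yw) //.
    move: Gxw; rewrite !(GE hk) Py e => /and4P [_ -> _ ->] /=; by rewrite andbT.
  rewrite (gdist1 (cardT3 hn hk) yx' Gyx) => Gyw.
  case: (eqVneq x w) => [<-|xw]; first by rewrite gdist0 // (cardT3 hn hk).
  rewrite (gdist1 (cardT3 hn hk) xw) //.
  move: Gyw; rewrite !(GE hk) Px -e => /and4P [_ -> _ ->] /=; by rewrite andbT.
move=> x y sx sy; rewrite (same_classE hk) => ne.
have Px := (SR_vertexE hn hk x).1 sx.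
have Py := (SR_vertexE hn hk y).1 sy.
split.
  case=> _ [_ [_ [_ [_ [m1 m2]]]]].
  apply/negP => Gxy.
  case: (boolP (tag x \subset tag y)) => hs.
    have hs' : ~~ (tag y \subset tag x).
      by apply: contra ne => h; rewrite eqEsubset hs h.
    by apply: (not_mmd hn hk _ hs' m2); rewrite (Gsym hk).
  exact: (not_mmd hn hk Gxy hs m1).
move=> nG.
have xy : x != y by apply: Pneq.
have hI : tag x :&: tag y == set0.
  by move: nG; rewrite (GE hk) Px Py xy /= negbK.
split => //; split => //; split; first by apply/eqP.
exact: (mmd_far hn hk).
Qed.
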